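(* (a) For all $\beta,\eta,\hat v(0)>0$ and $\mu\in\mathbb{R}$, the equation $$\sum_{p\in\Lambda^*}\frac{1}{e^{\beta(p^2-\widetilde\mu)}-1}=\frac{(\mu-\widetilde\mu)\eta}{\hat v(0)}$$ has a unique solution $\widetilde\mu\in(-\infty,0)$. (b) Fix $\kappa\in(0,\infty)$, $\hat v(0)>0$ and $c_0\in(0,1]$, and let $\beta=\kappa\beta_{\mathrm c}(\eta)$ with $\beta_{\mathrm c}(\eta)=\frac{1}{4\pi}\big(\frac{\eta}{\zeta(3/2)}\big)^{-2/3}$. There exist constants $c\in(0,1]$, $C>0$ and $\eta_0>0$ (depending on $\kappa,\hat v(0),c_0$) such that for all $\eta\ge\eta_0$ and all $\mu$ with $-c_0^{-1}\eta^{2/3}\le\mu\le c_0^{-1}$, the solution $\widetilde\mu$ of (a) satisfies $c\le\mu-\widetilde\mu\le c^{-1}$; moreover $-\widetilde\mu\le C$ if $\mu\ge0$, and $-\widetilde\mu\le C\eta^{2/3}$ if $\mu<0$. (c) Under the assumptions of (b), possibly after decreasing $c$, $\;c\eta\le\sum_{p\in\Lambda^*}\frac{1}{e^{\beta(p^2-\widetilde\mu)}-1}\le c^{-1}\eta$.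
   Context: $\Lambda^*=2\pi\mathbb{Z}^3$ (the dual lattice of the unit torus $[0,1]^3$); $\zeta$ is the Riemann zeta function; $\hat v(0)>0$ is a given positive constant. *)

(* Defs.v *)
From Stdlib Require Import Reals ZArith.
From Coquelicot Require Import Coquelicot.
Open Scope R_scope.

(* Bose-Einstein summand at p = 2*pi*(n1,n2,n3) in the dual lattice 2 pi Z^3:
   1 / (exp(beta (p^2 - m)) - 1). *)
Definition bose_term (beta m : R) (n1 n2 n3 : Z) : R :=
  / (exp (beta * ((2 * PI) ^ 2 * IZR (n1 * n1 + n2 * n2 + n3 * n3) - m)) - 1).

Definition box_sum (beta m : R) (N : nat) : R :=
  sum_f_R0 (fun i =>
    sum_f_R0 (fun j =>
      sum_f_R0 (fun k =>
        bose_term beta m (Z.of_nat i - Z.of_nat N)%Z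
                         (Z.of_nat j - Z.of_nat N)%Z
                         (Z.of_nat k - Z.of_nat N)%Z) (2 * N)) (2 * N)) (2 * N).

(* sum_{p in Lambda^*} 1/(exp(beta(p^2 - m)) - 1): limit of cube partial sums
   (all terms are positive when m < 0, so this is the unconditional sum). *)
Definition lattice_sum (beta m : R) : R := real (Lim_seq (box_sum beta m)).

Definition zeta32 : R := Series (fun n => / Rpower (INR n + 1) (3 / 2)).

Definition beta_c (eta : R) : R := / (4 * PI) * Rpower (eta / zeta32) (- (2 / 3)).

(* Main.v *)
Require Import Defs.
From Stdlib Require Import Reals ZArith Lra Lia Psatz.
From Coquelicot Require Import Coquelicot.
Open Scope R_scope.

Definition fb (y : R) : R := / (exp y - 1).

Lemma exp_le x y : x <= y -> exp x <= exp y.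
Proof. intro H. destruct (Req_dec x y) as [->|]. lra. left; apply exp_increasing; lra. Qed.

Lemma fb_pos y : 0 < y -> 0 < fb y.
Proof.
  intro H. unfold fb. apply Rinv_0_lt_compat.
  pose proof (exp_ineq1 y ltac:(lra)). lra.
Qed.

Lemma fb_anti y z : 0 < y -> y <= z -> fb z <= fb y.
Proof.
  intros Hy Hz. unfold fb.
  pose proof (exp_ineq1 y ltac:(lra)).
  assert (exp y <= exp z) by (apply exp_le; lra).
  apply Rinv_le_contravar; lra.
Qed.

Lemma fb_ge_exp y : 0 < y -> exp (- y) <= fb y.
Proof.
  intro H. unfold fb. rewrite exp_Ropp.
  pose proof (exp_ineq1 y ltac:(lra)).
  apply Rinv_le_contravar; lra.
Qed.

Lemma fb_le_inv y : 0 < y -> fb y <= / y.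
Proof.
  intro H. unfold fb.
  pose proof (exp_ineq1 y ltac:(lra)).
  apply Rinv_le_contravar; lra.
Qed.

Lemma exp_le_inv t : t < 1 -> exp t <= / (1 - t).
Proof.
  intro H. pose proof (exp_ineq1_le (- t)). rewrite exp_Ropp in H0.
  assert (0 < exp t) by apply exp_pos.
  apply (Rmult_le_reg_l (1 - t)); [lra|]. rewrite Rinv_r by lra.
  apply (Rmult_le_compat_r (exp t)) in H0; [|lra]. rewrite Rinv_l in H0 by lra. lra.
Qed.

Lemma fb_ge_half y : 0 < y -> y <= / 2 -> / (2 * y) <= fb y.
Proof.
  intros H1 H2. unfold fb.
  pose proof (exp_le_inv y ltac:(lra)).
  pose proof (exp_ineq1 y ltac:(lra)).
  apply Rinv_le_contravar; [lra|].
  assert (/ (1 - y) <= 1 + 2 * y).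
  { apply (Rmult_le_reg_l (1 - y)); [lra|]. rewrite Rinv_r by lra. nra. }
  lra.
Qed.

Lemma geom_id y K : 0 < y ->
  sum_f_R0 (fun k => exp (- (INR k + 1) * y)) K + exp (- (INR K + 1) * y) * fb y = fb y.
Proof.
  intro Hy. unfold fb.
  pose proof (exp_ineq1 y ltac:(lra)).
  assert (base : forall c, exp (- c * y) * / (exp y - 1) =
     exp (- (c + 1) * y) + exp (- (c+1) * y) * / (exp y - 1)).
  { intro c. replace (- c * y) with (- (c+1) * y + y) by ring.
    rewrite exp_plus. field. lra. }
  induction K.
  - simpl. replace (-(0+1)*y) with (- 0 * y + - y) by ring.
    rewrite exp_plus. replace (- 0 * y) with 0 by ring. rewrite exp_0, exp_Ropp. field.
    split; lra.
  - rewrite tech5. rewrite <- IHK at 2. rewrite (base (INR K + 1)).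
    rewrite S_INR. ring.
Qed.

Lemma exp_bd d : 0 <= d -> exp d - 1 <= d * exp d.
Proof.
  intro H. pose proof (exp_ineq1_le (- d)). rewrite exp_Ropp in H0.
  assert (0 < exp d) by apply exp_pos.
  apply (Rmult_le_compat_r (exp d)) in H0; [|lra]. rewrite Rinv_l in H0 by lra. lra.
Qed.

Lemma fb_diff y d : 0 < y -> 0 <= d -> fb y - fb (y + d) <= (exp d - 1) * (fb y * (1 + fb y)).
Proof.
  intros Hy Hd. unfold fb. rewrite exp_plus.
  pose proof (exp_ineq1 y ltac:(lra)).
  assert (1 <= exp d). { destruct (Req_dec d 0) as [->|]. rewrite exp_0; lra.
    pose proof (exp_ineq1 d ltac:(lra)); lra. }
  set (u := exp y) in *. set (e := exp d) in *.
  assert (u - 1 <= u * e - 1) by nra.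
  replace (/ (u - 1) - / (u * e - 1)) with (u * (e - 1) / ((u - 1) * (u * e - 1)))
    by (field; split; nra).
  replace ((e - 1) * (/ (u - 1) * (1 + / (u - 1)))) with (u * (e - 1) / ((u - 1) * (u - 1)))
    by (field; lra).
  unfold Rdiv. apply Rmult_le_compat_l. nra.
  apply Rinv_le_contravar; nra.
Qed.

Definition S1 (N : nat) (h : Z -> R) : R :=
  sum_f_R0 (fun i => h (Z.of_nat i - Z.of_nat N)%Z) (2 * N).

Lemma S1_ext N h g : (forall a, h a = g a) -> S1 N h = S1 N g.
Proof. intro H. unfold S1. apply sum_eq. intros; apply H. Qed.

Lemma S1_le N h g : (forall a, h a <= g a) -> S1 N h <= S1 N g.
Proof. intro H. unfold S1. apply sum_Rle. intros; apply H. Qed.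

Lemma S1_scal N c h : S1 N (fun a => c * h a) = c * S1 N h.
Proof. unfold S1. rewrite scal_sum. apply sum_eq. intros; ring. Qed.

Lemma S1_plus N h g : S1 N (fun a => h a + g a) = S1 N h + S1 N g.
Proof. unfold S1. apply sum_plus. Qed.

Lemma S1_const N c : S1 N (fun _ => c) = INR (2 * N + 1) * c.
Proof. unfold S1. rewrite sum_cte. rewrite Nat.add_1_r. ring. Qed.

Lemma S1_sum N K (F : nat -> Z -> R) :
  S1 N (fun a => sum_f_R0 (fun k => F k a) K) = sum_f_R0 (fun k => S1 N (F k)) K.
Proof.
  induction K.
  - simpl. reflexivity.
  - simpl. rewrite S1_plus. rewrite IHK. reflexivity.
Qed.

Lemma S1_succ N h : S1 (S N) h = h (- Z.of_nat (S N))%Z + S1 N h + h (Z.of_nat (S N)).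
Proof.
  unfold S1. replace (2 * S N)%nat with (S (S (2 * N))) by lia.
  rewrite tech5. rewrite decomp_sum by lia. simpl pred.
  replace (h (Z.of_nat 0 - Z.of_nat (S N))%Z) with (h (- Z.of_nat (S N))%Z) by (f_equal; lia).
  replace (h (Z.of_nat (S (S (2 * N))) - Z.of_nat (S N))%Z) with (h (Z.of_nat (S N)))
    by (f_equal; lia).
  assert (E : sum_f_R0 (fun i => h (Z.of_nat (S i) - Z.of_nat (S N))%Z) (2 * N) =
     sum_f_R0 (fun i => h (Z.of_nat i - Z.of_nat N)%Z) (2 * N)).
  { apply sum_eq. intros i _. f_equal. lia. }
  change (N + (N + 0))%nat with (2 * N)%nat. rewrite E. reflexivity.
Qed.

Lemma S1_nonneg N h : (forall a, 0 <= h a) -> 0 <= S1 N h.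
Proof.
  intro H. unfold S1. apply cond_pos_sum. intro; apply H.
Qed.

Lemma S1_mono N h g : (forall a, 0 <= h a) -> (forall a, g a <= h a) -> S1 N g <= S1 (S N) h.
Proof.
  intros H1 H2. rewrite S1_succ. pose proof (S1_le N g h H2).
  pose proof (H1 (- Z.of_nat (S N))%Z). pose proof (H1 (Z.of_nat (S N))). lra.
Qed.

Lemma box_eq b m N : box_sum b m N =
  S1 N (fun a => S1 N (fun b0 => S1 N (fun c => bose_term b m a b0 c))).
Proof. reflexivity. Qed.

Definition qz (a b c : Z) : R := IZR (a * a + b * b + c * c).

Lemma qz_nonneg a b c : 0 <= qz a b c.
Proof. unfold qz. apply IZR_le. nia. Qed.

Lemma qz_eq a b c : qz a b c = IZR a * IZR a + IZR b * IZR b + IZR c * IZR c.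
Proof. unfold qz. rewrite !plus_IZR, !mult_IZR. ring. Qed.

Definition w4 : R := (2 * PI) ^ 2.

Lemma w4_pos : 0 < w4.
Proof. unfold w4. pose proof PI_RGT_0. nra. Qed.

Lemma bose_fb b m a0 b0 c0 : bose_term b m a0 b0 c0 = fb (b * (w4 * qz a0 b0 c0 - m)).
Proof. reflexivity. Qed.

Lemma bose_pos b m a0 b0 c0 : 0 < b -> m < 0 -> 0 < bose_term b m a0 b0 c0.
Proof.
  intros Hb Hm. rewrite bose_fb. apply fb_pos.
  pose proof (qz_nonneg a0 b0 c0). pose proof w4_pos. apply Rmult_lt_0_compat; [lra|]. nra.
Qed.

Lemma Rabs_IZR_nat_neg n : Rabs (IZR (- Z.of_nat n)) = INR n.
Proof. rewrite opp_IZR, Rabs_Ropp, <- INR_IZR_INZ. apply Rabs_pos_eq, pos_INR. Qed.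

Lemma Rabs_IZR_nat n : Rabs (IZR (Z.of_nat n)) = INR n.
Proof. rewrite <- INR_IZR_INZ. apply Rabs_pos_eq, pos_INR. Qed.

Lemma geom_S1 N c : 0 < c ->
  S1 N (fun j => exp (- c * Rabs (IZR j))) <=
  (1 + exp (- c)) / (1 - exp (- c)) - 2 * exp (- c * (INR N + 1)) / (1 - exp (- c)).
Proof.
  intro Hc.
  assert (Hr : exp (- c) < 1). { rewrite <- exp_0. apply exp_increasing. lra. }
  assert (Hr0 : 0 < exp (- c)) by apply exp_pos.
  induction N.
  - unfold S1. simpl. rewrite Rabs_R0. replace (- c * 0) with 0 by ring.
    replace (- c * (0 + 1)) with (- c) by ring. rewrite exp_0.
    apply Req_le. field. lra.
  - rewrite S1_succ. rewrite Rabs_IZR_nat_neg, Rabs_IZR_nat.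
    rewrite S_INR.
    replace (- c * (INR N + 1 + 1)) with (- c * (INR N + 1) + - c) by ring.
    rewrite exp_plus.
    set (E := exp (- c * (INR N + 1))) in *. set (r := exp (- c)) in *.
    assert (IH : S1 N (fun j => exp (- c * Rabs (IZR j))) <= (1 + r) / (1 - r) - 2 * E / (1 - r))
      by exact IHN.
    assert (2 * E + ((1 + r) / (1 - r) - 2 * E / (1 - r)) = (1 + r) / (1 - r) - 2 * (E * r) / (1 - r))
      by (field; lra).
    lra.
Qed.

Lemma geom_S1' N c : 0 < c ->
  S1 N (fun j => exp (- c * Rabs (IZR j))) <= 1 + 2 / (exp c - 1).
Proof.
  intro Hc. pose proof (geom_S1 N c Hc).
  assert (Hr : exp (- c) < 1). { rewrite <- exp_0. apply exp_increasing. lra. }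
  assert (0 < exp (- c * (INR N + 1))) by apply exp_pos.
  assert (0 < exp (- c)) by apply exp_pos.
  assert (2 * exp (- c * (INR N + 1)) / (1 - exp (- c)) >= 0).
  { unfold Rdiv. apply Rle_ge. apply Rmult_le_pos. lra. left; apply Rinv_0_lt_compat; lra. }
  assert ((1 + exp (- c)) / (1 - exp (- c)) = 1 + 2 / (exp c - 1)).
  { rewrite exp_Ropp. pose proof (exp_ineq1 c ltac:(lra)). assert (0 < exp c) by apply exp_pos.
    assert (1 - / exp c <> 0).
    { intro Hx. assert (exp c * (1 - / exp c) = exp c - 1) by (field; lra). nra. }
    field. repeat split; lra. }
  lra.
Qed.

Definition theta (N : nat) (s : R) : R := S1 N (fun j => exp (- s * (IZR j * IZR j))).

Lemma theta_bound N s : 0 < s -> theta N s <= exp 1 * (1 + / sqrt s).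
Proof.
  intro Hs. unfold theta.
  assert (Hsq : 0 < sqrt s) by (apply sqrt_lt_R0; lra).
  assert (Hss : sqrt s * sqrt s = s) by (apply sqrt_sqrt; lra).
  apply Rle_trans with (S1 N (fun j => exp 1 * exp (- (2 * sqrt s) * Rabs (IZR j)))).
  { apply S1_le. intro a. rewrite <- exp_plus. apply exp_le.
    assert (IZR a * IZR a = Rabs (IZR a) * Rabs (IZR a)).
    { rewrite <- Rabs_mult. rewrite Rabs_pos_eq. auto. nra. }
    rewrite H. pose proof (Rabs_pos (IZR a)).
    set (t := Rabs (IZR a)) in *.
    assert (E : s * (t * t) = (sqrt s * t) * (sqrt s * t)) by (rewrite <- Hss at 1; ring).
    replace (- s * (t * t)) with (- (s * (t * t))) by ring.
    rewrite E. replace (- (2 * sqrt s) * t) with (- 2 * (sqrt s * t)) by ring.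
    generalize (sqrt s * t). intro v. pose proof (Rle_0_sqr (v - 1)). unfold Rsqr in *. lra. }
  rewrite S1_scal. apply Rmult_le_compat_l. left; apply exp_pos.
  eapply Rle_trans. apply geom_S1'. nra.
  pose proof (exp_ineq1_le (2 * sqrt s)).
  assert (2 / (exp (2 * sqrt s) - 1) <= / sqrt s).
  { apply Rle_trans with (2 / (2 * sqrt s)).
    unfold Rdiv. apply Rmult_le_compat_l. lra. apply Rinv_le_contravar; lra.
    right; field; lra. }
  lra.
Qed.

Lemma cube_bound u : 0 <= u -> (1 + u) ^ 3 <= 4 * (1 + u ^ 3).
Proof. intro H. assert (0 <= (1 - u) ^ 2 * (1 + u)) by (apply Rmult_le_pos; [apply pow2_ge_0|lra]).
  assert ((1 + u) ^ 3 = 4 * (1 + u ^ 3) - 3 * ((1 - u) ^ 2 * (1 + u))) by ring. lra. Qed.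

Lemma theta3_bound N s : 0 < s ->
  theta N s * theta N s * theta N s <= 4 * exp 1 ^ 3 * (1 + / (s * sqrt s)).
Proof.
  intro Hs. pose proof (theta_bound N s Hs).
  assert (Hsq : 0 < sqrt s) by (apply sqrt_lt_R0; lra).
  assert (0 <= theta N s).
  { unfold theta. apply S1_nonneg. intro; left; apply exp_pos. }
  assert (theta N s * theta N s * theta N s <= (exp 1 * (1 + / sqrt s)) ^ 3).
  { replace (theta N s * theta N s * theta N s) with (theta N s ^ 3) by ring.
    apply pow_incr. lra. }
  eapply Rle_trans. apply H1. rewrite Rpow_mult_distr.
  assert (0 < exp 1 ^ 3) by (apply pow_lt, exp_pos).
  pose proof (cube_bound (/ sqrt s) ltac:(left; apply Rinv_0_lt_compat; lra)).
  assert ((/ sqrt s) ^ 3 = / (s * sqrt s)).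
  { rewrite <- (sqrt_sqrt s) at 2 by lra. simpl. field. lra. }
  rewrite H4 in H3. nra.
Qed.

Lemma zsum_bound K :
  sum_f_R0 (fun k => / ((INR k + 1) * sqrt (INR k + 1))) K <= 3 - 2 / sqrt (INR K + 1).
Proof.
  induction K.
  - simpl. rewrite Rplus_0_l, sqrt_1. lra.
  - rewrite tech5. rewrite S_INR.
    pose proof (pos_INR K).
    set (a := sqrt (INR K + 1)) in *. set (b := sqrt (INR K + 1 + 1)).
    assert (Ha : 0 < a) by (apply sqrt_lt_R0; lra).
    assert (Hb : 0 < b) by (apply sqrt_lt_R0; lra).
    assert (Ea : a * a = INR K + 1) by (apply sqrt_sqrt; lra).
    assert (Eb : b * b = INR K + 1 + 1) by (apply sqrt_sqrt; lra).
    assert (a <= b) by (apply sqrt_le_1_alt; lra).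
    assert (/ ((INR K + 1 + 1) * b) <= 2 / a - 2 / b).
    { rewrite <- Eb.
      assert (Hba : (b - a) * (a + b) = 1) by nra.
      replace (2 / a - 2 / b) with (2 * (b - a) / (a * b)) by (field; lra).
      apply (Rmult_le_reg_l (a * b * b * b)). apply Rmult_lt_0_compat; [nra|lra].
      replace (a * b * b * b * / (b * b * b)) with a by (field; lra).
      replace (a * b * b * b * (2 * (b - a) / (a * b))) with (2 * (b - a) * (b * b)) by (field; lra).
      assert (0 <= b - a) by lra. assert (0 <= 2 * (b * b) - a * a - a * b) by nra.
      assert (0 <= (b - a) * (2 * (b * b) - a * a - a * b)) by (apply Rmult_le_pos; lra).
      nra. }
    lra.
Qed.

Lemma sum_scal_l c (f : nat -> R) N : sum_f_R0 (fun i => c * f i) N = c * sum_f_R0 f N.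
Proof. rewrite scal_sum. apply sum_eq. intros; ring. Qed.

Definition Gk (b : R) (k : nat) (j : Z) : R := exp (- ((INR k + 1) * b * w4) * (IZR j * IZR j)).
Definition Ak (x : R) (k : nat) : R := exp (- (INR k + 1) * x).

Lemma term_bound b m K a0 b0 c0 : 0 < b -> m < 0 ->
  bose_term b m a0 b0 c0 <=
  sum_f_R0 (fun k => (Ak (- b * m) k * Gk b k a0 * Gk b k b0) * Gk b k c0) K
  + exp (- (INR K + 1) * (- b * m)) * fb (- b * m).
Proof.
  intros Hb Hm. rewrite bose_fb.
  pose proof (qz_nonneg a0 b0 c0). pose proof w4_pos.
  set (x := - b * m).
  assert (Hx : 0 < x) by (unfold x; nra).
  assert (Hy : b * (w4 * qz a0 b0 c0 - m) = b * w4 * qz a0 b0 c0 + x) by (unfold x; ring).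
  assert (Hy0 : 0 <= b * w4 * qz a0 b0 c0) by (apply Rmult_le_pos; [nra|lra]).
  rewrite Hy. set (y := b * w4 * qz a0 b0 c0 + x) in *.
  rewrite <- (geom_id y K) by (unfold y; lra).
  apply Rplus_le_compat.
  - right. apply sum_eq. intros k _. unfold Ak, Gk. rewrite <- !exp_plus. f_equal.
    unfold y. rewrite qz_eq. ring.
  - apply Rmult_le_compat.
    + left; apply exp_pos.
    + left; apply fb_pos; unfold y; lra.
    + apply exp_le. pose proof (pos_INR K). unfold y. nra.
    + apply fb_anti; unfold y; lra.
Qed.

Lemma S1_lin N K (c : nat -> R) (G : nat -> Z -> R) d :
  S1 N (fun z => sum_f_R0 (fun k => c k * G k z) K + d) =
  sum_f_R0 (fun k => c k * S1 N (G k)) K + INR (2 * N + 1) * d.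
Proof.
  rewrite S1_plus, S1_const. f_equal.
  rewrite (S1_sum N K (fun k z => c k * G k z)). apply sum_eq. intros. apply S1_scal.
Qed.

Lemma box_upper1 b m N K : 0 < b -> m < 0 ->
  box_sum b m N <=
  sum_f_R0 (fun k => Ak (- b * m) k * (theta N ((INR k + 1) * b * w4) *
     theta N ((INR k + 1) * b * w4) * theta N ((INR k + 1) * b * w4))) K
  + INR (2 * N + 1) * (INR (2 * N + 1) * (INR (2 * N + 1) *
      (exp (- (INR K + 1) * (- b * m)) * fb (- b * m)))).
Proof.
  intros Hb Hm. rewrite box_eq.
  set (n := INR (2 * N + 1)). set (tau := exp (- (INR K + 1) * (- b * m)) * fb (- b * m)).
  set (A := Ak (- b * m)). set (G := Gk b).
  assert (Eth : forall k, S1 N (G k) = theta N ((INR k + 1) * b * w4)) by reflexivity.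
  set (th := fun k => theta N ((INR k + 1) * b * w4)).
  assert (H1 : forall a0 b0, S1 N (fun c0 => bose_term b m a0 b0 c0) <=
      sum_f_R0 (fun k => (A k * G k a0 * th k) * G k b0) K + n * tau).
  { intros a0 b0. eapply Rle_trans. apply S1_le. intro c0. apply (term_bound b m K a0 b0 c0 Hb Hm).
    eapply Rle_trans; [right; exact (S1_lin N K (fun k => A k * G k a0 * G k b0) G tau)|].
    right. f_equal. apply sum_eq. intros k _. rewrite Eth. unfold th. ring. }
  assert (H2 : forall a0, S1 N (fun b0 => S1 N (fun c0 => bose_term b m a0 b0 c0)) <=
      sum_f_R0 (fun k => (A k * th k * th k) * G k a0) K + n * (n * tau)).
  { intros a0. eapply Rle_trans. apply S1_le. intro b0. apply H1.
    eapply Rle_trans; [right; exact (S1_lin N K (fun k => A k * G k a0 * th k) G (n * tau))|].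
    right. f_equal. apply sum_eq. intros k _. rewrite Eth. unfold th. ring. }
  eapply Rle_trans. apply S1_le. intro a0. apply H2.
  eapply Rle_trans; [right; exact (S1_lin N K (fun k => A k * th k * th k) G (n * (n * tau)))|].
  right. f_equal. apply sum_eq. intros k _. rewrite Eth. unfold th. ring.
Qed.

Definition UB (b m : R) : R :=
  4 * exp 1 ^ 3 * fb (- b * m) + 12 * exp 1 ^ 3 / (b * w4 * sqrt (b * w4)) + 1.

Lemma box_bound b m N : 0 < b -> m < 0 -> box_sum b m N <= UB b m.
Proof.
  intros Hb Hm. pose proof w4_pos.
  set (x := - b * m). assert (Hx : 0 < x) by (unfold x; nra).
  set (n := INR (2 * N + 1)). assert (Hn : 0 < n) by (unfold n; apply lt_0_INR; lia).
  pose proof (fb_pos x Hx).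
  destruct (INR_archimed x (n * (n * (n * fb x)))) as [K HK]; [lra|].
  pose proof (box_upper1 b m N K Hb Hm). fold x n in H1.
  set (P := b * w4) in *. assert (HP : 0 < P) by (unfold P; nra).
  assert (HsP : 0 < sqrt P) by (apply sqrt_lt_R0; lra).
  assert (HE : 0 < exp 1 ^ 3) by (apply pow_lt, exp_pos).
  assert (Ht : n * (n * (n * (exp (- (INR K + 1) * x) * fb x))) <= 1).
  { replace (- (INR K + 1) * x) with (- ((INR K + 1) * x)) by ring. rewrite exp_Ropp.
    pose proof (exp_ineq1_le ((INR K + 1) * x)). pose proof (exp_pos ((INR K + 1) * x)).
    replace (n * (n * (n * (/ exp ((INR K + 1) * x) * fb x)))) with
      ((n * (n * (n * fb x))) / exp ((INR K + 1) * x)) by (field; lra).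
    apply (Rmult_le_reg_r (exp ((INR K + 1) * x))). lra.
    unfold Rdiv. rewrite Rmult_assoc, Rinv_l by lra. nra. }
  assert (Hs : sum_f_R0 (fun k => Ak x k * (theta N ((INR k + 1) * b * w4) *
     theta N ((INR k + 1) * b * w4) * theta N ((INR k + 1) * b * w4))) K <=
     4 * exp 1 ^ 3 * fb x + 12 * exp 1 ^ 3 / (P * sqrt P)).
  { apply Rle_trans with (sum_f_R0 (fun k => 4 * exp 1 ^ 3 * Ak x k +
        4 * exp 1 ^ 3 * (/ (P * sqrt P)) * / ((INR k + 1) * sqrt (INR k + 1))) K).
    { apply sum_Rle. intros k _.
      assert (Hk : 0 < INR k + 1) by (pose proof (pos_INR k); lra).
      assert (Hsk : 0 < (INR k + 1) * b * w4) by (apply Rmult_lt_0_compat; nra).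
      pose proof (theta3_bound N _ Hsk).
      assert (HA : 0 < Ak x k <= 1).
      { unfold Ak. split. apply exp_pos. apply Rle_trans with (exp 0); [apply exp_le|rewrite exp_0; lra].
        assert (0 <= (INR k + 1) * x) by (apply Rmult_le_pos; lra). lra. }
      assert (E : / ((INR k + 1) * b * w4 * sqrt ((INR k + 1) * b * w4)) =
         / (P * sqrt P) * / ((INR k + 1) * sqrt (INR k + 1))).
      { replace ((INR k + 1) * b * w4) with ((INR k + 1) * P) by (unfold P; ring).
        rewrite sqrt_mult by lra.
        assert (0 < sqrt (INR k + 1)) by (apply sqrt_lt_R0; lra).
        field. split; lra. }
      rewrite E in H2.
      assert (0 <= / (P * sqrt P) * / ((INR k + 1) * sqrt (INR k + 1))).
      { apply Rmult_le_pos; left; apply Rinv_0_lt_compat; apply Rmult_lt_0_compat; try lra.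
        apply sqrt_lt_R0; lra. }
      assert (0 <= theta N ((INR k + 1) * b * w4)).
      { unfold theta. apply S1_nonneg. intro; left; apply exp_pos. }
      assert (0 <= theta N ((INR k + 1) * b * w4) * theta N ((INR k + 1) * b * w4) *
          theta N ((INR k + 1) * b * w4)) by (repeat apply Rmult_le_pos; auto).
      set (T3 := theta N ((INR k + 1) * b * w4) * theta N ((INR k + 1) * b * w4) *
          theta N ((INR k + 1) * b * w4)) in *.
      set (Q := / (P * sqrt P) * / ((INR k + 1) * sqrt (INR k + 1))) in *.
      apply Rle_trans with (Ak x k * (4 * exp 1 ^ 3 * (1 + Q))).
      apply Rmult_le_compat_l; lra.
      replace (4 * exp 1 ^ 3 * / (P * sqrt P) * / ((INR k + 1) * sqrt (INR k + 1))) with (4 * exp 1 ^ 3 * Q)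
        by (unfold Q; ring).
      assert (0 <= 4 * exp 1 ^ 3 * Q) by (apply Rmult_le_pos; lra).
      assert (Ak x k * (4 * exp 1 ^ 3 * Q) <= 1 * (4 * exp 1 ^ 3 * Q)) by (apply Rmult_le_compat_r; lra).
      lra. }
    rewrite sum_plus. rewrite !sum_scal_l.
    apply Rplus_le_compat.
    - apply Rmult_le_compat_l. lra.
      pose proof (geom_id x K Hx).
      assert (0 <= exp (- (INR K + 1) * x) * fb x) by (apply Rmult_le_pos; left; [apply exp_pos|auto]).
      unfold Ak. lra.
    - pose proof (zsum_bound K).
      assert (0 < / sqrt (INR K + 1)) by (apply Rinv_0_lt_compat, sqrt_lt_R0; pose proof (pos_INR K); lra).
      assert (0 < / (P * sqrt P)) by (apply Rinv_0_lt_compat; nra).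
      replace (12 * exp 1 ^ 3 / (P * sqrt P)) with (4 * exp 1 ^ 3 * / (P * sqrt P) * 3) by (field; lra).
      apply Rmult_le_compat_l. nra. unfold Rdiv in H2. lra. }
  unfold UB. fold x. fold P. lra.
Qed.

Lemma box_incr b m N : 0 < b -> m < 0 -> box_sum b m N <= box_sum b m (S N).
Proof.
  intros Hb Hm. rewrite !box_eq.
  apply S1_mono.
  - intro a. apply S1_nonneg. intro. apply S1_nonneg. intro. left; apply bose_pos; auto.
  - intro a. apply S1_mono.
    + intro. apply S1_nonneg. intro. left; apply bose_pos; auto.
    + intro. apply S1_mono.
      * intro. left; apply bose_pos; auto.
      * intro. lra.
Qed.

Lemma lat_lim b m : 0 < b -> m < 0 -> is_lim_seq (box_sum b m) (lattice_sum b m).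
Proof.
  intros Hb Hm.
  destruct (ex_finite_lim_seq_incr (box_sum b m) (UB b m)) as [l Hl].
  - intro n; apply box_incr; auto.
  - intro n; apply box_bound; auto.
  - unfold lattice_sum. rewrite (is_lim_seq_unique _ _ Hl). simpl. exact Hl.
Qed.

Lemma lat_ge_box b m N : 0 < b -> m < 0 -> box_sum b m N <= lattice_sum b m.
Proof.
  intros Hb Hm. apply (is_lim_seq_incr_compare (box_sum b m)).
  apply lat_lim; auto. intro; apply box_incr; auto.
Qed.

Lemma lat_le_UB b m : 0 < b -> m < 0 -> lattice_sum b m <= UB b m.
Proof.
  intros Hb Hm.
  pose proof (is_lim_seq_le (box_sum b m) (fun _ => UB b m) (lattice_sum b m) (UB b m)
    (fun n => box_bound b m n Hb Hm) (lat_lim b m Hb Hm) (is_lim_seq_const _)).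
  simpl in H. exact H.
Qed.

Lemma box_zero b m : box_sum b m 0 = fb (b * (w4 * 0 - m)).
Proof. reflexivity. Qed.

Lemma lat_ge_fb b m : 0 < b -> m < 0 -> fb (- b * m) <= lattice_sum b m.
Proof.
  intros Hb Hm. pose proof (lat_ge_box b m 0 Hb Hm). rewrite box_zero in H.
  replace (b * (w4 * 0 - m)) with (- b * m) in H by ring. exact H.
Qed.

Lemma box_scal N k (F : Z -> Z -> Z -> R) :
  S1 N (fun a => S1 N (fun b => S1 N (fun c => k * F a b c))) =
  k * S1 N (fun a => S1 N (fun b => S1 N (fun c => F a b c))).
Proof.
  rewrite <- S1_scal. apply S1_ext. intro a. rewrite <- S1_scal. apply S1_ext. intro b.
  apply S1_scal.
Qed.

Lemma lat_cmp b m1 m2 k : 0 < b -> m1 < 0 -> m2 < 0 ->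
  (forall a0 b0 c0, k * bose_term b m2 a0 b0 c0 <= bose_term b m1 a0 b0 c0) ->
  k * lattice_sum b m2 <= lattice_sum b m1.
Proof.
  intros Hb H1 H2 H.
  assert (Hn : forall N, k * box_sum b m2 N <= box_sum b m1 N).
  { intro N. rewrite !box_eq. rewrite <- box_scal.
    apply S1_le; intro; apply S1_le; intro; apply S1_le; intro; apply H. }
  pose proof (is_lim_seq_le _ _ _ _ Hn (is_lim_seq_scal_l _ k _ (lat_lim b m2 Hb H2))
    (lat_lim b m1 Hb H1)).
  simpl in H0. exact H0.
Qed.

Lemma lat_mono b m1 m2 : 0 < b -> m1 <= m2 -> m2 < 0 -> lattice_sum b m1 <= lattice_sum b m2.
Proof.
  intros Hb H12 H2.
  pose proof (lat_cmp b m2 m1 1 Hb H2 ltac:(lra)). rewrite Rmult_1_l in H. apply H.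
  intros. rewrite Rmult_1_l. rewrite !bose_fb. apply fb_anti.
  pose proof (qz_nonneg a0 b0 c0). pose proof w4_pos. apply Rmult_lt_0_compat; [lra|]. nra.
  apply Rmult_le_compat_l; lra.
Qed.

Lemma lat_lip b a m1 m2 bb : 0 < b -> a <= m1 -> m1 <= m2 -> m2 <= bb -> bb < 0 ->
  lattice_sum b m2 - lattice_sum b m1 <=
  (m2 - m1) * (b * exp (b * (bb - a)) * (1 + fb (- b * bb)) * lattice_sum b bb).
Proof.
  intros Hb Ha H12 H2 Hbb.
  set (d := b * (m2 - m1)). assert (Hd : 0 <= d) by (unfold d; nra).
  set (f0 := fb (- b * bb)). assert (Hf0 : 0 < f0) by (apply fb_pos; nra).
  set (c := (exp d - 1) * (1 + f0)).
  assert (Hc : 0 <= c). { unfold c. pose proof (exp_ineq1_le d). apply Rmult_le_pos; lra. }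
  assert (Hcmp : (1 - c) * lattice_sum b m2 <= lattice_sum b m1).
  { apply lat_cmp; try lra. intros a0 b0 c0. rewrite !bose_fb.
    pose proof (qz_nonneg a0 b0 c0). pose proof w4_pos.
    set (y := b * (w4 * qz a0 b0 c0 - m2)).
    assert (Hq : 0 <= w4 * qz a0 b0 c0) by (apply Rmult_le_pos; lra).
    assert (Hy : - b * bb <= y).
    { unfold y. replace (b * (w4 * qz a0 b0 c0 - m2)) with (b * (w4 * qz a0 b0 c0) + b * (- m2)) by ring.
      assert (0 <= b * (w4 * qz a0 b0 c0)) by (apply Rmult_le_pos; lra).
      assert (b * (- bb) <= b * (- m2)) by (apply Rmult_le_compat_l; lra). lra. }
    assert (Hy0 : 0 < y) by (assert (0 < b * (- bb)) by (apply Rmult_lt_0_compat; lra); lra).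
    replace (b * (w4 * qz a0 b0 c0 - m1)) with (y + d) by (unfold y, d; ring).
    pose proof (fb_diff y d Hy0 Hd).
    assert (fb y <= f0) by (apply fb_anti; nra).
    pose proof (fb_pos y Hy0).
    assert (exp d - 1 >= 0) by (pose proof (exp_ineq1_le d); lra).
    assert ((exp d - 1) * (fb y * (1 + fb y)) <= c * fb y).
    { unfold c. replace ((exp d - 1) * (1 + f0) * fb y) with ((exp d - 1) * (fb y * (1 + f0))) by ring.
      apply Rmult_le_compat_l. lra. apply Rmult_le_compat_l; lra. }
    lra. }
  assert (HL2 : lattice_sum b m2 <= lattice_sum b bb) by (apply lat_mono; lra).
  assert (HL0 : 0 <= lattice_sum b m2).
  { pose proof (lat_ge_fb b m2 Hb ltac:(lra)). pose proof (fb_pos (- b * m2) ltac:(nra)). lra. }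
  assert (Hed : exp d - 1 <= d * exp (b * (bb - a))).
  { eapply Rle_trans. apply exp_bd; auto. apply Rmult_le_compat_l; auto. apply exp_le. unfold d. nra. }
  assert (c * lattice_sum b m2 <= (d * exp (b * (bb - a))) * (1 + f0) * lattice_sum b bb).
  { unfold c. apply Rle_trans with ((exp d - 1) * (1 + f0) * lattice_sum b bb).
    apply Rmult_le_compat_l; auto.
    apply Rmult_le_compat_r. pose proof (lat_ge_fb b bb Hb Hbb). fold f0 in H. lra.
    apply Rmult_le_compat_r; lra. }
  unfold d in H. lra.
Qed.

Lemma lip_cont (g : R -> R) K : 0 <= K ->
  (forall x y, Rabs (g x - g y) <= K * Rabs (x - y)) -> continuity g.
Proof.
  intros HK H x. unfold continuity_pt, continue_in, limit1_in, limit_in.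
  intros eps Heps. exists (eps / (K + 1)). split.
  - apply Rdiv_lt_0_compat; lra.
  - intros y [_ Hy]. simpl in *. unfold R_dist in *.
    eapply Rle_lt_trans. apply H.
    apply Rle_lt_trans with (K * (eps / (K + 1))).
    apply Rmult_le_compat_l; lra.
    apply (Rmult_lt_reg_r (K + 1)). lra.
    replace (K * (eps / (K + 1)) * (K + 1)) with (K * eps) by (field; lra). nra.
Qed.

Definition cl (a b m : R) : R := Rmax a (Rmin b m).

Lemma cl_lip a b x y : a <= b -> Rabs (cl a b x - cl a b y) <= Rabs (x - y).
Proof.
  intro Hab. unfold cl, Rmax, Rmin.
  destruct (Rle_dec b x); destruct (Rle_dec b y);
  repeat match goal with |- context [Rle_dec ?u ?v] => destruct (Rle_dec u v) end;
  unfold Rabs; repeat destruct Rcase_abs; lra.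
Qed.

Lemma cl_range a b x : a <= b -> a <= cl a b x <= b.
Proof.
  intro Hab. unfold cl, Rmax, Rmin.
  destruct (Rle_dec b x);
  repeat match goal with |- context [Rle_dec ?u ?v] => destruct (Rle_dec u v) end; lra.
Qed.

Lemma cl_id a b x : a <= x <= b -> cl a b x = x.
Proof.
  intro H. unfold cl, Rmax, Rmin.
  destruct (Rle_dec b x);
  repeat match goal with |- context [Rle_dec ?u ?v] => destruct (Rle_dec u v) end; lra.
Qed.

Lemma partA (beta eta v0 mu : R) : 0 < beta -> 0 < eta -> 0 < v0 ->
  exists! mt : R, mt < 0 /\ lattice_sum beta mt = (mu - mt) * eta / v0.
Proof.
  intros Hb He Hv.
  set (F := fun m => lattice_sum beta m - (mu - m) * eta / v0).
  pose proof w4_pos.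
  set (Q := (Rabs mu + 1) * eta / v0).
  assert (HQ : 0 < Q) by (unfold Q; apply Rdiv_lt_0_compat; [apply Rmult_lt_0_compat; [pose proof (Rabs_pos mu); lra|lra]|lra]).
  set (t := Rmin 1 (/ (2 * beta * (2 + Q)))).
  assert (Ht0 : 0 < t).
  { unfold t. apply Rmin_glb_lt. lra. apply Rinv_0_lt_compat. nra. }
  assert (Ht1 : t <= 1) by apply Rmin_l.
  assert (Ht2 : t <= / (2 * beta * (2 + Q))) by apply Rmin_r.
  set (bb := - t).
  assert (Fbb : 0 < F bb).
  { unfold F, bb. pose proof (lat_ge_fb beta (- t) Hb ltac:(lra)).
    replace (- beta * - t) with (beta * t) in H0 by ring.
    assert (Hbt : 2 * beta * t <= / (2 + Q)).
    { apply (Rmult_le_reg_l (2 * beta)). nra.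
      replace (2 * beta * (2 * beta * t)) with ((2 * beta) * (2 * beta * t)) by ring.
      apply Rle_trans with (2 * beta * (2 * beta * / (2 * beta * (2 + Q)))).
      apply Rmult_le_compat_l. nra. apply Rmult_le_compat_l; nra.
      right. field. split; lra. }
    assert (Hbt2 : beta * t <= / 2).
    { assert (/ (2 + Q) <= / 2) by (apply Rinv_le_contravar; lra). lra. }
    pose proof (fb_ge_half (beta * t) ltac:(nra) Hbt2).
    assert (2 + Q <= / (2 * (beta * t))).
    { replace (2 * (beta * t)) with (2 * beta * t) by ring.
      rewrite <- (Rinv_inv (2 + Q)). apply Rinv_le_contravar. nra. exact Hbt. }
    assert ((mu - - t) * eta / v0 <= Q).
    { unfold Q. unfold Rdiv. apply Rmult_le_compat_r. left; apply Rinv_0_lt_compat; lra.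
      apply Rmult_le_compat_r. lra. pose proof (Rle_abs mu). lra. }
    lra. }
  set (D := 4 * exp 1 ^ 3 * fb beta + 12 * exp 1 ^ 3 / (beta * w4 * sqrt (beta * w4)) + 1).
  assert (HD : 0 < D).
  { unfold D. pose proof (fb_pos beta Hb). assert (0 < exp 1 ^ 3) by (apply pow_lt, exp_pos).
    assert (0 < beta * w4) by nra. assert (0 < sqrt (beta * w4)) by (apply sqrt_lt_R0; lra).
    assert (0 < 12 * exp 1 ^ 3 / (beta * w4 * sqrt (beta * w4))) by (apply Rdiv_lt_0_compat; nra).
    nra. }
  assert (HLD : forall m, m <= -1 -> lattice_sum beta m <= D).
  { intros m Hm. eapply Rle_trans. apply lat_le_UB; auto. lra.
    unfold UB, D. assert (fb (- beta * m) <= fb beta) by (apply fb_anti; nra).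
    assert (0 < exp 1 ^ 3) by (apply pow_lt, exp_pos). nra. }
  set (s := D * v0 / eta + Rabs mu + 1).
  assert (Hs1 : D * v0 / eta > 0) by (apply Rdiv_lt_0_compat; nra).
  assert (Hs : 1 < s) by (unfold s; pose proof (Rabs_pos mu); lra).
  set (a := - s).
  assert (Fa : F a < 0).
  { unfold F, a. pose proof (HLD (- s) ltac:(lra)).
    assert ((mu - - s) * eta / v0 >= D + eta / v0).
    { unfold s. pose proof (Rle_abs (- mu)). rewrite Rabs_Ropp in H1.
      replace ((mu - - (D * v0 / eta + Rabs mu + 1)) * eta / v0) with
        (D + (mu + Rabs mu + 1) * eta / v0) by (field; lra).
      assert (eta / v0 <= (mu + Rabs mu + 1) * eta / v0).
      { unfold Rdiv. rewrite Rmult_assoc. rewrite <- (Rmult_1_l (eta * / v0)) at 1.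
        apply Rmult_le_compat_r. apply Rmult_le_pos; [lra|left; apply Rinv_0_lt_compat; lra]. lra. }
      lra. }
    assert (0 < eta / v0) by (apply Rdiv_lt_0_compat; lra). lra. }
  assert (Hab : a < bb) by (unfold a, bb; lra).
  assert (Hbb : bb < 0) by (unfold bb; lra).
  set (KF := beta * exp (beta * (bb - a)) * (1 + fb (- beta * bb)) * lattice_sum beta bb + eta / v0).
  assert (HKF : 0 <= KF).
  { unfold KF. pose proof (fb_pos (- beta * bb) ltac:(nra)).
    pose proof (lat_ge_fb beta bb Hb Hbb).
    assert (0 < eta / v0) by (apply Rdiv_lt_0_compat; lra).
    assert (0 <= beta * exp (beta * (bb - a)) * (1 + fb (- beta * bb)) * lattice_sum beta bb).
    { repeat apply Rmult_le_pos; try lra. left; apply exp_pos. }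
    lra. }
  assert (FL : forall u v, a <= u <= bb -> a <= v <= bb -> Rabs (F u - F v) <= KF * Rabs (u - v)).
  { assert (W : forall u v, a <= u -> u <= v -> v <= bb -> Rabs (F v - F u) <= KF * Rabs (v - u)).
    { intros u v H1 H2 H3.
      pose proof (lat_lip beta a u v bb Hb H1 H2 H3 Hbb).
      pose proof (lat_mono beta u v Hb H2 ltac:(lra)).
      rewrite (Rabs_pos_eq (v - u)) by lra.
      unfold F. rewrite Rabs_pos_eq.
      - unfold KF. replace ((v - u) * (beta * exp (beta * (bb - a)) * (1 + fb (- beta * bb)) * lattice_sum beta bb + eta / v0))
          with ((v - u) * (beta * exp (beta * (bb - a)) * (1 + fb (- beta * bb)) * lattice_sum beta bb) + (v - u) * eta / v0)
          by (field; lra).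
        replace (lattice_sum beta v - (mu - v) * eta / v0 - (lattice_sum beta u - (mu - u) * eta / v0))
          with (lattice_sum beta v - lattice_sum beta u + (v - u) * eta / v0) by (field; lra).
        lra.
      - replace (lattice_sum beta v - (mu - v) * eta / v0 - (lattice_sum beta u - (mu - u) * eta / v0))
          with (lattice_sum beta v - lattice_sum beta u + (v - u) * (eta / v0)) by (field; lra).
        assert (0 <= (v - u) * (eta / v0)) by (apply Rmult_le_pos; [lra|left; apply Rdiv_lt_0_compat; lra]).
        lra. }
    intros u v Hu Hv2. destruct (Rle_dec u v).
    - rewrite Rabs_minus_sym. rewrite (Rabs_minus_sym u v). apply W; lra.
    - apply W; lra. }
  set (g := fun m => F (cl a bb m)).
  assert (Hg : continuity g).
  { apply (lip_cont g KF HKF). intros x y. unfold g.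
    eapply Rle_trans. apply FL; apply cl_range; lra.
    apply Rmult_le_compat_l; auto. apply cl_lip; lra. }
  assert (ga : g a = F a) by (unfold g; rewrite cl_id; auto; lra).
  assert (gb : g bb = F bb) by (unfold g; rewrite cl_id; auto; lra).
  destruct (IVT_gen g a bb 0 Hg) as [z [Hz Hgz]].
  { rewrite ga, gb. rewrite Rmin_left by lra. rewrite Rmax_right by lra. lra. }
  rewrite Rmin_left in Hz by lra. rewrite Rmax_right in Hz by lra.
  unfold g in Hgz. rewrite cl_id in Hgz by lra.
  exists z. split.
  - split. lra. unfold F in Hgz. lra.
  - intros y [Hy Hye].
    destruct (Rtotal_order z y) as [Hlt|[Heq|Hgt]]; auto.
    + pose proof (lat_mono beta z y Hb ltac:(lra) Hy). unfold F in Hgz.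
      assert ((mu - y) * eta / v0 < (mu - z) * eta / v0).
      { unfold Rdiv. apply Rmult_lt_compat_r. apply Rinv_0_lt_compat; lra.
        apply Rmult_lt_compat_r; lra. }
      lra.
    + pose proof (lat_mono beta y z Hb ltac:(lra) ltac:(lra)). unfold F in Hgz.
      assert ((mu - z) * eta / v0 < (mu - y) * eta / v0).
      { unfold Rdiv. apply Rmult_lt_compat_r. apply Rinv_0_lt_compat; lra.
        apply Rmult_lt_compat_r; lra. }
      lra.
Qed.

Lemma sqrt_exp y : sqrt (exp y) = exp (y / 2).
Proof.
  rewrite <- (sqrt_square (exp (y / 2))) by (left; apply exp_pos).
  rewrite <- exp_plus. f_equal. f_equal. field.
Qed.

Lemma Rpower32 x : 0 < x -> Rpower x (3 / 2) = x * sqrt x.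
Proof.
  intro H. replace (3 / 2) with (1 + / 2) by field.
  rewrite Rpower_plus, Rpower_1, Rpower_sqrt; auto.
Qed.

Lemma zeta_pos : 0 < zeta32.
Proof.
  set (a := fun n : nat => / Rpower (INR n + 1) (3 / 2)).
  assert (Ea : forall n, a n = / ((INR n + 1) * sqrt (INR n + 1))).
  { intro n. unfold a. rewrite Rpower32. auto. pose proof (pos_INR n); lra. }
  assert (Hpos : forall n, 0 < a n).
  { intro n. rewrite Ea. pose proof (pos_INR n).
    apply Rinv_0_lt_compat, Rmult_lt_0_compat. lra. apply sqrt_lt_R0; lra. }
  assert (Hinc : forall n, sum_n a n <= sum_n a (S n)).
  { intro n. rewrite !sum_n_Reals. rewrite tech5. pose proof (Hpos (S n)). lra. }
  assert (Hbd : forall n, sum_n a n <= 3).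
  { intro n. rewrite sum_n_Reals. pose proof (zsum_bound n).
    assert (0 < 2 / sqrt (INR n + 1)).
    { apply Rdiv_lt_0_compat. lra. apply sqrt_lt_R0. pose proof (pos_INR n); lra. }
    assert (sum_f_R0 a n = sum_f_R0 (fun k => / ((INR k + 1) * sqrt (INR k + 1))) n)
      by (apply sum_eq; intros; apply Ea).
    lra. }
  destruct (ex_finite_lim_seq_incr (sum_n a) 3 Hinc Hbd) as [l Hl].
  assert (Hs : is_series a l) by exact Hl.
  unfold zeta32. fold a. rewrite (is_series_unique a l Hs).
  pose proof (is_lim_seq_incr_compare (sum_n a) l Hl Hinc 0).
  rewrite sum_n_Reals in H. simpl in H. pose proof (Hpos 0%nat). lra.
Qed.

Lemma beta_facts kappa eta : 0 < kappa -> 0 < eta ->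
  0 < kappa * beta_c eta /\
  kappa * beta_c eta * Rpower eta (2 / 3) = kappa / (4 * PI) * Rpower zeta32 (2 / 3) /\
  kappa * beta_c eta * w4 * sqrt (kappa * beta_c eta * w4) =
    (PI * kappa) * sqrt (PI * kappa) * zeta32 / eta.
Proof.
  intros Hk He. pose proof zeta_pos as Hz. pose proof PI_RGT_0 as Hpi.
  unfold beta_c, Rpower.
  set (L := ln (eta / zeta32)).
  assert (HL : L = ln eta - ln zeta32) by (unfold L; apply ln_div; auto).
  split; [|split].
  - apply Rmult_lt_0_compat; auto. apply Rmult_lt_0_compat.
    apply Rinv_0_lt_compat; lra. apply exp_pos.
  - replace (kappa * (/ (4 * PI) * exp (- (2 / 3) * L)) * exp (2 / 3 * ln eta))
      with (kappa / (4 * PI) * (exp (- (2 / 3) * L) * exp (2 / 3 * ln eta))) by (field; lra).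
    rewrite <- exp_plus. rewrite HL. f_equal. f_equal. ring.
  - assert (E1 : kappa * (/ (4 * PI) * exp (- (2 / 3) * L)) * w4 = (PI * kappa) * exp (- (2 / 3) * L)).
    { unfold w4. field. lra. }
    rewrite E1. rewrite sqrt_mult. rewrite sqrt_exp.
    2: { apply Rmult_le_pos; lra. }
    2: { left; apply exp_pos. }
    replace (PI * kappa * exp (- (2 / 3) * L) * (sqrt (PI * kappa) * exp (- (2 / 3) * L / 2)))
      with (PI * kappa * sqrt (PI * kappa) * (exp (- (2 / 3) * L) * exp (- (2 / 3) * L / 2))) by ring.
    rewrite <- exp_plus.
    replace (- (2 / 3) * L + - (2 / 3) * L / 2) with (- L) by field.
    rewrite exp_Ropp. unfold L. rewrite exp_ln by (apply Rdiv_lt_0_compat; auto).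
    field. split; lra.
Qed.

Lemma S1_le_box M h g : (forall a, (- Z.of_nat M <= a <= Z.of_nat M)%Z -> h a <= g a) ->
  S1 M h <= S1 M g.
Proof. intro H. unfold S1. apply sum_Rle. intros i Hi. apply H. lia. Qed.

Lemma box_lower b m M : 0 < b -> m < 0 ->
  INR (2 * M + 1) * (INR (2 * M + 1) * (INR (2 * M + 1) *
    exp (- (3 * (b * w4) * (INR M * INR M) + - b * m)))) <= lattice_sum b m.
Proof.
  intros Hb Hm. eapply Rle_trans; [|apply (lat_ge_box b m M Hb Hm)].
  rewrite box_eq. set (c := exp (- (3 * (b * w4) * (INR M * INR M) + - b * m))).
  rewrite <- (S1_const M). apply S1_le_box. intros a0 Ha.
  rewrite <- (S1_const M). apply S1_le_box. intros b0 Hb0.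
  rewrite <- (S1_const M). apply S1_le_box. intros c0 Hc0.
  rewrite bose_fb. pose proof w4_pos. pose proof (qz_nonneg a0 b0 c0).
  assert (Hq : qz a0 b0 c0 <= 3 * (INR M * INR M)).
  { rewrite qz_eq. rewrite INR_IZR_INZ.
    assert (forall z, (- Z.of_nat M <= z <= Z.of_nat M)%Z -> IZR z * IZR z <= IZR (Z.of_nat M) * IZR (Z.of_nat M)).
    { intros z Hz. rewrite <- !mult_IZR. apply IZR_le. nia. }
    pose proof (H1 a0 Ha). pose proof (H1 b0 Hb0). pose proof (H1 c0 Hc0). lra. }
  eapply Rle_trans; [|apply fb_ge_exp].
  - unfold c. apply exp_le.
    assert (b * (w4 * qz a0 b0 c0) <= b * (w4 * (3 * (INR M * INR M)))).
    { apply Rmult_le_compat_l. lra. apply Rmult_le_compat_l; lra. }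
    nra.
  - assert (0 <= b * (w4 * qz a0 b0 c0)) by (apply Rmult_le_pos; [lra|apply Rmult_le_pos; lra]).
    nra.
Qed.

Lemma partB (kappa v0 c0 : R) : 0 < kappa -> 0 < v0 -> 0 < c0 <= 1 ->
     exists c C eta0 : R, 0 < c <= 1 /\ 0 < C /\ 0 < eta0 /\
       forall eta mu mt : R, eta0 <= eta ->
         - / c0 * Rpower eta (2 / 3) <= mu <= / c0 ->
         mt < 0 ->
         lattice_sum (kappa * beta_c eta) mt = (mu - mt) * eta / v0 ->
         (c <= mu - mt <= / c) /\
         (0 <= mu -> - mt <= C) /\
         (mu < 0 -> - mt <= C * Rpower eta (2 / 3)) /\
         (c * eta <= lattice_sum (kappa * beta_c eta) mt <= / c * eta).
Proof.
  intros Hk Hv [Hc0 Hc1].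
  pose proof zeta_pos as Hz. pose proof PI_RGT_0 as Hpi. pose proof w4_pos as Hw.
  set (A := kappa / (4 * PI) * Rpower zeta32 (2 / 3)).
  assert (HA : 0 < A).
  { unfold A, Rpower. apply Rmult_lt_0_compat. apply Rdiv_lt_0_compat; lra. apply exp_pos. }
  assert (Hspk : 0 < sqrt (PI * kappa)) by (apply sqrt_lt_R0; nra).
  set (al := / (PI * kappa * sqrt (PI * kappa) * zeta32)).
  assert (Hal : 0 < al).
  { unfold al. apply Rinv_0_lt_compat. apply Rmult_lt_0_compat; [|lra]. apply Rmult_lt_0_compat; [|lra]. apply Rmult_lt_0_compat; lra. }
  set (e3 := exp 1 ^ 3). assert (He3 : 0 < e3) by (unfold e3; apply pow_lt, exp_pos).
  set (D1 := v0 * (4 * e3 / A + 12 * e3 * al + 1)).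
  assert (HD1 : 0 < D1).
  { unfold D1. apply Rmult_lt_0_compat; auto.
    assert (0 < 4 * e3 / A) by (apply Rdiv_lt_0_compat; lra).
    assert (0 < 12 * e3 * al) by nra. lra. }
  assert (Hic0 : 1 <= / c0).
  { rewrite <- Rinv_1. apply Rinv_le_contravar; lra. }
  set (Dmax := D1 + / c0 + 1). assert (HDmax : 0 < Dmax) by (unfold Dmax; lra).
  set (X0 := A * Dmax + A / c0).
  set (Dmin := al * v0 * exp (- (3 + X0))).
  assert (HDmin : 0 < Dmin).
  { unfold Dmin. repeat apply Rmult_lt_0_compat; auto. apply exp_pos. }
  set (c := Rmin (Rmin 1 Dmin) (Rmin (Dmin / v0) (Rmin (/ Dmax) (v0 / Dmax)))).
  assert (Hc_1 : c <= 1) by (unfold c; eapply Rle_trans; [apply Rmin_l|apply Rmin_l]).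
  assert (Hc_Dmin : c <= Dmin) by (unfold c; eapply Rle_trans; [apply Rmin_l|apply Rmin_r]).
  assert (Hc_Dv : c <= Dmin / v0) by (unfold c; eapply Rle_trans; [apply Rmin_r|apply Rmin_l]).
  assert (Hc_iD : c <= / Dmax).
  { unfold c. eapply Rle_trans; [apply Rmin_r|]. eapply Rle_trans; [apply Rmin_r|apply Rmin_l]. }
  assert (Hc_vD : c <= v0 / Dmax).
  { unfold c. eapply Rle_trans; [apply Rmin_r|]. eapply Rle_trans; [apply Rmin_r|apply Rmin_r]. }
  assert (Hcpos : 0 < c).
  { unfold c. repeat apply Rmin_glb_lt; try lra.
    apply Rdiv_lt_0_compat; lra. apply Rinv_0_lt_compat; lra. apply Rdiv_lt_0_compat; lra. }
  exists c, (Dmax + / c0), (Rmax 1 (/ al)).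
  split; [lra|]. split; [lra|]. split.
  { eapply Rlt_le_trans; [|apply Rmax_l]. lra. }
  intros eta mu mt Heta Hmu Hmt Heq.
  assert (He1 : 1 <= eta) by (eapply Rle_trans; [apply Rmax_l|exact Heta]).
  assert (Heal : 1 <= al * eta).
  { assert (/ al <= eta) by (eapply Rle_trans; [apply Rmax_r|exact Heta]).
    apply (Rmult_le_compat_l al) in H; [|lra]. rewrite Rinv_r in H; lra. }
  assert (Heta0 : 0 < eta) by lra.
  destruct (beta_facts kappa eta Hk Heta0) as [Hb [HbE HP]].
  fold A in HbE.
  set (b := kappa * beta_c eta) in *.
  set (E := Rpower eta (2 / 3)) in *.
  assert (Hlneta : 0 <= ln eta).
  { destruct (Req_dec eta 1) as [->|Hne]. rewrite ln_1; lra.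
    rewrite <- ln_1. left. apply ln_increasing; lra. }
  assert (HE1 : 1 <= E).
  { unfold E, Rpower. apply Rle_trans with (exp 0). rewrite exp_0; lra. apply exp_le. nra. }
  assert (HEe : E <= eta).
  { unfold E, Rpower. rewrite <- (exp_ln eta) at 2 by lra. apply exp_le. nra. }
  assert (Hbinv : / b = E / A).
  { rewrite <- HbE. field. lra. }
  set (P := b * w4) in *.
  assert (HPpos : 0 < P) by (unfold P; nra).
  set (sP := sqrt P) in *.
  assert (HsP : 0 < sP) by (apply sqrt_lt_R0; lra).
  assert (HsPP : sP * sP = P) by (apply sqrt_sqrt; lra).
  assert (HPinv : / (P * sP) = al * eta).
  { rewrite HP. unfold al. field. repeat split; nra. }
  assert (HPsP : P * sP <= 1).
  { assert (0 < P * sP) by nra.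
    assert (/ (P * sP) >= 1) by lra.
    apply Rnot_lt_le. intro Hc. assert (/ (P * sP) < 1).
    { rewrite <- Rinv_1. apply Rinv_lt_contravar; lra. }
    lra. }
  assert (HsP1 : sP <= 1).
  { apply Rnot_lt_le. intro Hc. assert (1 < P) by nra. nra. }
  set (T := lattice_sum b mt) in *.
  set (x := - b * mt).
  assert (Hx : 0 < x) by (unfold x; nra).
  set (D := mu - mt) in *.
  assert (HT : T = D * eta / v0) by exact Heq.
  assert (HDT : D = T * v0 / eta) by (rewrite HT; field; lra).
  assert (HDmax_ : D <= Dmax).
  { destruct (Rle_dec mt (-1)) as [Hm1|Hm1].
    - pose proof (lat_le_UB b mt Hb Hmt). fold T in H. unfold UB in H. fold x P e3 in H.
      fold sP in H.
      assert (fb x <= eta / A).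
      { eapply Rle_trans. apply fb_le_inv; auto.
        apply Rle_trans with (/ b). apply Rinv_le_contravar. lra. unfold x. nra.
        rewrite Hbinv. unfold Rdiv. apply Rmult_le_compat_r. left; apply Rinv_0_lt_compat; lra. lra. }
      assert (12 * e3 / (P * sP) = 12 * e3 * al * eta).
      { unfold Rdiv. rewrite HPinv. ring. }
      assert (T <= eta * (4 * e3 / A + 12 * e3 * al + 1)).
      { replace (eta * (4 * e3 / A + 12 * e3 * al + 1)) with (4 * e3 * (eta / A) + 12 * e3 * al * eta + eta)
          by (field; lra).
        assert (4 * e3 * fb x <= 4 * e3 * (eta / A)) by (apply Rmult_le_compat_l; lra). lra. }
      assert (D <= D1).
      { rewrite HDT. unfold D1.
        apply (Rmult_le_reg_r (eta / v0)). apply Rdiv_lt_0_compat; lra.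
        replace (T * v0 / eta * (eta / v0)) with T by (field; lra).
        replace (v0 * (4 * e3 / A + 12 * e3 * al + 1) * (eta / v0)) with (eta * (4 * e3 / A + 12 * e3 * al + 1))
          by (field; lra). lra. }
      unfold Dmax. lra.
    - unfold D, Dmax. lra. }
  assert (HxX0 : x <= X0).
  { assert (x = b * (D - mu)) by (unfold x, D; ring).
    assert (D - mu <= Dmax + E / c0).
    { assert (- mu <= / c0 * E) by lra. unfold Rdiv. rewrite Rmult_comm. lra. }
    assert (x <= b * (Dmax + E / c0)) by (rewrite H; apply Rmult_le_compat_l; lra).
    assert (b * (Dmax + E / c0) = A / E * Dmax + A / c0).
    { rewrite <- HbE. field. split; lra. }
    assert (A / E * Dmax <= A * Dmax).
    { apply Rmult_le_compat_r. lra. unfold Rdiv. rewrite <- (Rmult_1_r A) at 2.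
      apply Rmult_le_compat_l. lra. rewrite <- Rinv_1. apply Rinv_le_contravar; lra. }
    unfold X0. lra. }
  destruct (nfloor_ex (/ sP)) as [M [HM1 HM2]].
  { left; apply Rinv_0_lt_compat; lra. }
  assert (HisP : 1 <= / sP) by (rewrite <- Rinv_1; apply Rinv_le_contravar; lra).
  pose proof (box_lower b mt M Hb Hmt). fold T P in H. fold x in H.
  assert (Hn : INR (2 * M + 1) = 2 * INR M + 1) by (rewrite plus_INR, mult_INR; simpl; ring).
  rewrite Hn in H.
  assert (HnM : / sP <= 2 * INR M + 1) by lra.
  assert (HMM : P * (INR M * INR M) <= 1).
  { pose proof (pos_INR M).
    assert (INR M * INR M <= / sP * / sP) by (apply Rmult_le_compat; lra).
    assert (P * (/ sP * / sP) = 1) by (rewrite <- HsPP; field; lra). nra. }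
  assert (Hexp : exp (- (3 + X0)) <= exp (- (3 * P * (INR M * INR M) + x))).
  { apply exp_le. nra. }
  assert (Hcube : al * eta <= (2 * INR M + 1) * ((2 * INR M + 1) * (2 * INR M + 1))).
  { rewrite <- HPinv. replace (/ (P * sP)) with (/ sP * (/ sP * / sP)) by (rewrite <- HsPP; field; lra).
    assert (0 < / sP) by lra.
    apply Rmult_le_compat; try lra. nra. apply Rmult_le_compat; lra. }
  assert (HTlow : al * eta * exp (- (3 + X0)) <= T).
  { eapply Rle_trans; [|exact H].
    replace ((2 * INR M + 1) * ((2 * INR M + 1) * ((2 * INR M + 1) * exp (- (3 * P * (INR M * INR M) + x)))))
      with ((2 * INR M + 1) * ((2 * INR M + 1) * (2 * INR M + 1)) * exp (- (3 * P * (INR M * INR M) + x))) by ring.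
    apply Rmult_le_compat; [left; apply Rmult_lt_0_compat; lra | left; apply exp_pos | exact Hcube | exact Hexp]. }
  assert (HDmin_ : Dmin <= D).
  { rewrite HDT. unfold Dmin.
    apply (Rmult_le_reg_r (eta / v0)). apply Rdiv_lt_0_compat; lra.
    replace (T * v0 / eta * (eta / v0)) with T by (field; lra).
    replace (al * v0 * exp (- (3 + X0)) * (eta / v0)) with (al * eta * exp (- (3 + X0))) by (field; lra).
    lra. }
  assert (HiDmax : Dmax <= / c).
  { rewrite <- (Rinv_inv Dmax). apply Rinv_le_contravar; auto. }
  split; [|split; [|split]].
  - split; lra.
  - intro Hmu0. unfold D in *. lra.
  - intro Hmu0. unfold D in *.
    assert (Dmax <= Dmax * E) by (rewrite <- (Rmult_1_r Dmax) at 1; apply Rmult_le_compat_l; lra).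
    assert (- mu <= / c0 * E) by lra. nra.
  - split.
    + rewrite HT. apply Rle_trans with (Dmin / v0 * eta).
      apply Rmult_le_compat_r; lra.
      replace (D * eta / v0) with (D / v0 * eta) by (field; lra).
      apply Rmult_le_compat_r. lra. unfold Rdiv. apply Rmult_le_compat_r.
      left; apply Rinv_0_lt_compat; lra. lra.
    + rewrite HT. replace (D * eta / v0) with (D / v0 * eta) by (field; lra).
      apply Rmult_le_compat_r. lra.
      assert (Dmax / v0 <= / c).
      { rewrite <- (Rinv_inv (Dmax / v0)). apply Rinv_le_contravar; auto.
        rewrite Rinv_div. auto. }
      assert (D / v0 <= Dmax / v0).
      { unfold Rdiv. apply Rmult_le_compat_r. left; apply Rinv_0_lt_compat; lra. lra. }
      lra.
Qed.

Theorem lemmaA1 :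
  (* (a) *)
  (forall beta eta v0 mu : R, 0 < beta -> 0 < eta -> 0 < v0 ->
     exists! mt : R, mt < 0 /\ lattice_sum beta mt = (mu - mt) * eta / v0)
  /\
  (* (b) and (c) *)
  (forall kappa v0 c0 : R, 0 < kappa -> 0 < v0 -> 0 < c0 <= 1 ->
     exists c C eta0 : R, 0 < c <= 1 /\ 0 < C /\ 0 < eta0 /\
       forall eta mu mt : R, eta0 <= eta ->
         - / c0 * Rpower eta (2 / 3) <= mu <= / c0 ->
         mt < 0 ->
         lattice_sum (kappa * beta_c eta) mt = (mu - mt) * eta / v0 ->
         (c <= mu - mt <= / c) /\
         (0 <= mu -> - mt <= C) /\
         (mu < 0 -> - mt <= C * Rpower eta (2 / 3)) /\
         (c * eta <= lattice_sum (kappa * beta_c eta) mt <= / c * eta)).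
Proof.
  split.
  - intros. apply partA; auto.
  - intros. apply partB; auto.
Qed.
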